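(* If $U$ is one of the operators $V_1,W_1,V_2,W_2$, then (a) the eigenvalues of $U$ are $i$ and $-i$, and (b) for each $n\in\mathbb N$ the space $Y_{4n}$ is invariant under $U$. If $U$ is one of the operators $V_{1r},W_{1r},V_{1b},W_{1b},V_{2r},W_{2r},V_{2b},W_{2b}$, then (a$'$) the eigenvalues of $U$ are $\{\pm i\sqrt j\}_{j=0}^\infty$; (b$'$) $\mathrm{span}\{x: Ux=\lambda x,\ |\lambda|<\sqrt n\}\subset Y_{4n}$ for every $n\in\mathbb N$; (c$'$) $\mathrm{span}\{x: Ux=\lambda x,\ |\lambda|>\sqrt n\}\subset Y_{4n}^\perp$ for every $n\in\mathbb N$.
   Context: Let $X=(L^2(\mathbb R))^4$ with orthonormal basis $\{\phi_j\}_{j\ge1}$ given, for $q=0,1,2,\dots$, by $\phi_{4q+1}=(|q\rangle,0,0,0)$, $\phi_{4q+2}=(0,|q\rangle,0,0)$, $\phi_{4q+3}=(0,0,|q\rangle,0)$, $\phi_{4q+4}=(0,0,0,|q\rangle)$, where $|q\rangle$ is the $q$-th Hermite function. For distinct indices $j,k$ define operators $E_{j,k},F_{j,k}$ on $X$ by $E_{j,k}\phi_j=i\phi_k$, $E_{j,k}\phi_k=i\phi_j$, $F_{j,k}\phi_j=-\phi_k$, $F_{j,k}\phi_k=\phi_j$, and $E_{j,k}\phi_l=F_{j,k}\phi_l=0$ for $l\notin\{j,k\}$. With all sums over $q\ge0$, define $V_1=-\sum(E_{4q+1,4q+2}+E_{4q+3,4q+4})$, $W_1=\sum(F_{4q+1,4q+2}+F_{4q+3,4q+4})$,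 $V_{1r}=-\sum\sqrt{q+1}(E_{4q+2,4q+5}+E_{4q+4,4q+7})$, $W_{1r}=\sum\sqrt{q+1}(F_{4q+2,4q+5}+F_{4q+4,4q+7})$, $V_{1b}=-\sum\sqrt{q+1}(E_{4q+1,4q+6}+E_{4q+3,4q+8})$, $W_{1b}=-\sum\sqrt{q+1}(F_{4q+1,4q+6}+F_{4q+3,4q+8})$, $V_2=-\sum(E_{4q+1,4q+3}+E_{4q+2,4q+4})$, $W_2=\sum(F_{4q+1,4q+3}+F_{4q+2,4q+4})$, $V_{2r}=-\sum\sqrt{q+1}(E_{4q+1,4q+7}+E_{4q+2,4q+8})$, $W_{2r}=\sum\sqrt{q+1}(F_{4q+1,4q+7}+F_{4q+2,4q+8})$, $V_{2b}=-\sum\sqrt{q+1}(E_{4q+3,4q+5}+E_{4q+4,4q+6})$, $W_{2b}=-\sum\sqrt{q+1}(F_{4q+3,4q+5}+F_{4q+4,4q+6})$. $Y_k=\mathrm{span}\{\phi_1,\dots,\phi_k\}$. *)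

(* Defs.v *)
From Stdlib Require Import Reals List.
From Coquelicot Require Import Coquelicot.
Open Scope C_scope.

(* X = (L^2(R))^4 is modelled through its orthonormal basis (phi_j)_{j>=1}:
   a vector is its coefficient sequence; coordinate l (0-based) is the
   coefficient of phi_(l+1).  X = l^2. *)
Definition vec := nat -> C.

Definition l2 (x : vec) : Prop := ex_series (fun j => (Cmod (x j) ^ 2)%R).

Definition phi (j : nat) : vec := fun l => if Nat.eqb (S l) j then 1 else 0.

Definition in_span (P : vec -> Prop) (x : vec) : Prop :=
  exists L : list (prod C vec),
    List.Forall (fun p => P (snd p)) L /\
    forall l, x l = fold_right (fun p acc => fst p * snd p l + acc) 0 L.

Definition Y (k : nat) : vec -> Prop :=
  in_span (fun v => exists j, (1 <= j <= k)%nat /\ v = phi j).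

Definition inner_is (x y : vec) (z : C) : Prop :=
  is_series (fun j => x j * Cconj (y j)) z.

Definition Yperp (k : nat) (x : vec) : Prop :=
  l2 x /\ forall y, Y k y -> inner_is x y 0.

Definition Eop (j k : nat) (x : vec) : vec := fun l =>
  if Nat.eqb (S l) k then Ci * x (j - 1)%nat
  else if Nat.eqb (S l) j then Ci * x (k - 1)%nat else 0.
Definition Fop (j k : nat) (x : vec) : vec := fun l =>
  if Nat.eqb (S l) k then - x (j - 1)%nat
  else if Nat.eqb (S l) j then x (k - 1)%nat else 0.

Fixpoint csum (f : nat -> C) (n : nat) : C :=
  match n with O => 0 | S m => csum f m + f m end.

(* In every family below, the term of
   index q only involves basis indices >= 4q+1, so at coordinate l only
   terms with q <= l can be nonzero: the coordinatewise series is the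
   finite sum over q < l+1. *)
Definition opsum (T : nat -> vec -> vec) (x : vec) : vec :=
  fun l => csum (fun q => T q x l) (S l).

Definition sq1 (q : nat) : C := RtoC (sqrt (INR (S q))).

Definition V1 : vec -> vec := fun x l => - opsum (fun q x =>
  fun l => Eop (4*q+1) (4*q+2) x l + Eop (4*q+3) (4*q+4) x l) x l.
Definition W1 : vec -> vec := fun x l => opsum (fun q x =>
  fun l => Fop (4*q+1) (4*q+2) x l + Fop (4*q+3) (4*q+4) x l) x l.
Definition V1r : vec -> vec := fun x l => - opsum (fun q x =>
  fun l => sq1 q * (Eop (4*q+2) (4*q+5) x l + Eop (4*q+4) (4*q+7) x l)) x l.
Definition W1r : vec -> vec := fun x l => opsum (fun q x =>
  fun l => sq1 q * (Fop (4*q+2) (4*q+5) x l + Fop (4*q+4) (4*q+7) x l)) x l.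
Definition V1b : vec -> vec := fun x l => - opsum (fun q x =>
  fun l => sq1 q * (Eop (4*q+1) (4*q+6) x l + Eop (4*q+3) (4*q+8) x l)) x l.
Definition W1b : vec -> vec := fun x l => - opsum (fun q x =>
  fun l => sq1 q * (Fop (4*q+1) (4*q+6) x l + Fop (4*q+3) (4*q+8) x l)) x l.
Definition V2 : vec -> vec := fun x l => - opsum (fun q x =>
  fun l => Eop (4*q+1) (4*q+3) x l + Eop (4*q+2) (4*q+4) x l) x l.
Definition W2 : vec -> vec := fun x l => opsum (fun q x =>
  fun l => Fop (4*q+1) (4*q+3) x l + Fop (4*q+2) (4*q+4) x l) x l.
Definition V2r : vec -> vec := fun x l => - opsum (fun q x =>
  fun l => sq1 q * (Eop (4*q+1) (4*q+7) x l + Eop (4*q+2) (4*q+8) x l)) x l.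
Definition W2r : vec -> vec := fun x l => opsum (fun q x =>
  fun l => sq1 q * (Fop (4*q+1) (4*q+7) x l + Fop (4*q+2) (4*q+8) x l)) x l.
Definition V2b : vec -> vec := fun x l => - opsum (fun q x =>
  fun l => sq1 q * (Eop (4*q+3) (4*q+5) x l + Eop (4*q+4) (4*q+6) x l)) x l.
Definition W2b : vec -> vec := fun x l => - opsum (fun q x =>
  fun l => sq1 q * (Fop (4*q+3) (4*q+5) x l + Fop (4*q+4) (4*q+6) x l)) x l.

Definition dom (U : vec -> vec) (x : vec) : Prop := l2 x /\ l2 (U x).

Definition eigpair (U : vec -> vec) (lam : C) (x : vec) : Prop :=
  dom U x /\ forall l, U x l = lam * x l.

Definition eigenvalue (U : vec -> vec) (lam : C) : Prop :=
  exists x, eigpair U lam x /\ x <> (fun _ => 0).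

(* Main.v *)
Require Import Defs.
From Stdlib Require Import Reals List Lia Lra Classical FunctionalExtensionality.
From Coquelicot Require Import Coquelicot.
Open Scope C_scope.

Lemma sqrtINR0 : sqrt (INR 0) = 0%R.
Proof. simpl. apply sqrt_0. Qed.
Lemma sqrtINR1 : sqrt (INR 1) = 1%R.
Proof. simpl. apply sqrt_1. Qed.

Definition BlockRep (U : vec -> vec) (p : nat -> nat) (s : nat -> C) (k : nat -> nat) :=
  forall x l, U x l = s l * RtoC (sqrt (INR (k l))) * x (p l).

Definition Good U p s k : Prop := BlockRep U p s k /\ (forall l, p (p l) = l) /\
  (forall l, k l <> 0%nat -> s l * s (p l) = -1) /\ (forall l, k (p l) = k l) /\
  (forall l, p l = l -> k l = 0%nat) /\ (forall l, (l <= p l + 8)%nat).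

Definition finsupp (x : vec) N := forall l, (N <= l)%nat -> x l = 0.

Lemma sum_n_stable {G : AbelianMonoid} (a : nat -> G) N :
  (forall n, (N < n)%nat -> a n = zero) -> forall n, (N <= n)%nat -> sum_n a n = sum_n a N.
Proof. intros H n Hn. induction Hn; auto. rewrite sum_Sn, IHHn, H by lia. apply plus_zero_r. Qed.

Lemma is_series_fin {K : AbsRing} {V : NormedModule K} (a : nat -> V) N :
  (forall n, (N < n)%nat -> a n = zero) -> is_series a (sum_n a N).
Proof.
  intros H. unfold is_series. apply filterlim_ext_loc with (fun _ => sum_n a N).
  - exists N. intros n Hn. symmetry. apply sum_n_stable; auto.
  - apply filterlim_const.
Qed.

Lemma fin_l2 x N : finsupp x N -> l2 x.
Proof.
  intros H. exists (sum_n (fun j => (Cmod (x j) ^ 2)%R) N). apply (@is_series_fin R_AbsRing R_NormedModule).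
  intros n Hn. rewrite H by lia. rewrite Cmod_0. unfold zero; simpl. ring.
Qed.

Lemma finsupp_U U p s k x N : BlockRep U p s k -> (forall l, (l <= p l + 8)%nat) ->
  finsupp x N -> finsupp (U x) (N+8).
Proof. intros HR Hb Hx l Hl. rewrite HR, Hx by (specialize (Hb l); lia). ring. Qed.

Lemma nonzero_exists (x:vec) : x <> (fun _ => 0) -> exists l, x l <> 0.
Proof.
  intros H. apply NNPP. intros H'. apply H. apply functional_extensionality. intros l.
  apply NNPP. intros Hl. apply H'. eauto.
Qed.

Lemma eig_sq U p s k lam x l : Good U p s k -> (forall m, U x m = lam * x m) -> x l <> 0 ->
  lam * lam = - (RtoC (sqrt (INR (k l))) * RtoC (sqrt (INR (k l)))).
Proof.
  intros (HR & Hinv & Hs & Hk & _) HE Hx.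
  set (w := RtoC (sqrt (INR (k l)))).
  assert (E1 : s l * w * x (p l) = lam * x l) by (rewrite <- HE, HR; reflexivity).
  assert (E2 : s (p l) * w * x l = lam * x (p l)).
  { rewrite <- HE, HR, Hinv, Hk. reflexivity. }
  assert (H : lam*lam*x l = -(w*w)*x l).
  { transitivity (lam * (lam * x l)); [ring|]. rewrite <- E1.
    transitivity (s l * w * (lam * x (p l))); [ring|]. rewrite <- E2.
    transitivity ((s l * s (p l)) * (w*w) * x l); [ring|].
    destruct (Nat.eq_dec (k l) 0) as [E|E].
    - unfold w. rewrite E, sqrtINR0. ring.
    - rewrite Hs by auto. ring. }
  transitivity (lam*lam*x l * / x l). field; auto. rewrite H. field; auto.
Qed.

Lemma Csq_form (lam : C) (w : R) : (0 <= w)%R -> lam*lam = -(RtoC w * RtoC w) ->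
  lam = Ci * RtoC w \/ lam = -(Ci * RtoC w).
Proof.
  destruct lam as [a b]. intros Hw H.
  pose proof (f_equal fst H) as H1. pose proof (f_equal snd H) as H2. simpl in H1, H2.
  assert (Hab : (a*b = 0)%R) by lra.
  assert (Hq : (a*a*(a*a + w*w) = 0)%R).
  { replace (a*a + w*w)%R with (b*b)%R by lra. replace (a*a*(b*b))%R with ((a*b)*(a*b))%R by ring.
    rewrite Hab. ring. }
  assert (Ha : a = 0%R).
  { apply Rmult_integral in Hq. destruct Hq as [Hq|Hq]; nra. }
  subst a.
  assert (Hb : ((b - w) * (b + w) = 0)%R) by nra.
  apply Rmult_integral in Hb. destruct Hb as [Hb|Hb].
  - left. apply injective_projections; simpl; lra.
  - right. apply injective_projections; simpl; lra.
Qed.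

Lemma eig_form U p s k lam x l : Good U p s k -> (forall m, U x m = lam * x m) -> x l <> 0 ->
  lam = Ci * RtoC (sqrt (INR (k l))) \/ lam = -(Ci * RtoC (sqrt (INR (k l)))).
Proof. intros. apply Csq_form. apply sqrt_pos. eapply eig_sq; eauto. Qed.

Lemma Cmod_form w lam : (0 <= w)%R -> (lam = Ci*RtoC w \/ lam = -(Ci*RtoC w)) -> Cmod lam = w.
Proof. intros Hw [->| ->]; rewrite ?Cmod_opp, Cmod_mult, Cmod_Ci, Cmod_R, Rabs_pos_eq; lra. Qed.

Lemma C_neq (a b : R) : a <> b -> RtoC a <> RtoC b.
Proof. intros H E. apply H. exact (f_equal fst E). Qed.

Ltac destr := match goal with |- context [Nat.eqb ?a ?b] => destruct (Nat.eqb_spec a b) end.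

Lemma eig_exists U p s k l lam : Good U p s k ->
  (lam = Ci * RtoC (sqrt (INR (k l))) \/ lam = -(Ci * RtoC (sqrt (INR (k l))))) ->
  eigenvalue U lam.
Proof.
  intros G Hlam. pose proof G as (HR & Hinv & Hs & Hk & Hfix & Hb).
  destruct (Nat.eq_dec (k l) 0) as [Hk0|Hk0].
  - assert (Hl0 : lam = 0).
    { rewrite Hk0, sqrtINR0 in Hlam. destruct Hlam as [->| ->]; apply injective_projections; simpl; ring. }
    exists (fun m => if Nat.eqb m l then 1 else 0). split; [split; [split|]|].
    + apply (fin_l2 _ (S l)). intros m Hm. destr; [lia|auto].
    + apply (fin_l2 _ (S l + 8)). apply (finsupp_U _ p s k); auto. intros m Hm. destr; [lia|auto].
    + intros m. rewrite HR, Hl0. destr.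
      * assert (k m = 0%nat) by (rewrite <- Hk, e; auto). rewrite H, sqrtINR0. ring.
      * ring.
    + intros E. pose proof (f_equal (fun f => f l) E) as E'. simpl in E'. rewrite Nat.eqb_refl in E'.
      apply (C_neq 1 0); [lra| exact E'].
  - assert (Hpl : p l <> l) by (intros E; apply Hk0, Hfix, E).
    set (w := RtoC (sqrt (INR (k l)))) in *.
    assert (Hw : w <> 0).
    { apply C_neq. assert (0 < sqrt (INR (k l)))%R by (apply sqrt_lt_R0, lt_0_INR; lia). lra. }
    assert (Hsl : s l <> 0).
    { intros E. specialize (Hs l Hk0). rewrite E in Hs.
      assert (Hc : 0 * s (p l) = 0) by ring. rewrite Hc in Hs.
      apply (C_neq 0 (-1)); [lra|]. rewrite Hs. apply injective_projections; simpl; ring. }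
    assert (Hsq : lam * lam = -(w*w)).
    { destruct Hlam as [->| ->]; apply injective_projections; simpl; ring. }
    set (mu := lam / (s l * w)).
    exists (fun m => if Nat.eqb m l then (1:C) else if Nat.eqb m (p l) then mu else (0:C)).
    split; [split; [split|]|].
    + apply (fin_l2 _ (S (l + p l))). intros m Hm. repeat destr; try lia; auto.
    + apply (fin_l2 _ (S (l + p l) + 8)). apply (finsupp_U _ p s k); auto.
      intros m Hm. repeat destr; try lia; auto.
    + intros m. rewrite HR.
      destruct (Nat.eqb_spec m l) as [->|Hml].
      * destruct (Nat.eqb_spec (p l) l); [contradiction|]. rewrite Nat.eqb_refl.
        unfold mu. fold w. field. auto.
      * destruct (Nat.eqb_spec m (p l)) as [->|Hmpl].
        -- rewrite Hinv, Nat.eqb_refl, Hk. fold w. unfold mu.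
           replace (lam * (lam / (s l * w))) with ((lam*lam) / (s l * w)) by (field; auto).
           rewrite Hsq. replace (-(w*w)) with ((s l * s (p l)) * (w*w)) by (rewrite Hs by auto; ring).
           field. auto.
        -- destruct (Nat.eqb_spec (p m) l) as [E|E].
           { exfalso. apply Hmpl. rewrite <- E, Hinv. reflexivity. }
           destruct (Nat.eqb_spec (p m) (p l)) as [E'|E'].
           { exfalso. apply Hml. rewrite <- (Hinv m), E', Hinv. reflexivity. }
           ring.
    + intros E. pose proof (f_equal (fun f => f l) E) as E'. simpl in E'. rewrite Nat.eqb_refl in E'.
      apply (C_neq 1 0); [lra| exact E'].
Qed.

Lemma eig_char U p s k lam : Good U p s k -> (eigenvalue U lam <->
  exists l, lam = Ci * RtoC (sqrt (INR (k l))) \/ lam = -(Ci * RtoC (sqrt (INR (k l))))).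
Proof.
  intros G. split.
  - intros (x & (Hdom & HE) & Hnz). destruct (nonzero_exists x Hnz) as (l & Hl).
    exists l. eapply eig_form; eauto.
  - intros (l & Hl). eapply eig_exists; eauto.
Qed.

Lemma span_zero (P : vec -> Prop) (Rl : nat -> Prop) x :
  (forall v, P v -> forall l, Rl l -> v l = 0) -> in_span P x -> forall l, Rl l -> x l = 0.
Proof.
  intros H (L & HF & Hx) l Hl. rewrite Hx. clear Hx.
  induction HF; cbn [fold_right]; [auto|]. rewrite IHHF. replace (@snd C (nat -> C) x0 l) with (RtoC 0) by (symmetry; apply H; auto). ring.
Qed.

Lemma span_fin (P : vec -> Prop) x : (forall v, P v -> exists N, finsupp v N) ->
  in_span P x -> exists N, finsupp x N.
Proof.
  intros H (L & HF & Hx).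
  assert (exists N, forall l, (N <= l)%nat ->
     fold_right (fun p acc => fst p * snd p l + acc) 0 L = 0) as (N & HN).
  { clear Hx. induction HF.
    - exists 0%nat. auto.
    - destruct IHHF as (N1 & H1). destruct (H _ H0) as (N2 & H2). exists (N1+N2)%nat.
      intros m Hm. cbn [fold_right]. rewrite H1 by lia. replace (@snd C (nat -> C) x0 m) with (RtoC 0) by (symmetry; apply H2; lia). ring. }
  exists N. intros l Hl. rewrite Hx. auto.
Qed.

Lemma fold_seq (x : vec) s K l :
  fold_right (fun p acc => fst p * snd p l + acc) 0 (map (fun i => (x i, phi (S i))) (seq s K))
  = if andb (s <=? l)%nat (l <? s + K)%nat then x l else 0.
Proof.
  revert s. induction K; intros s; simpl.
  - destruct (Nat.leb_spec s l), (Nat.ltb_spec l (s+0)); try lia; reflexivity.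
  - rewrite IHK. unfold phi.
    destruct (Nat.leb_spec s l), (Nat.ltb_spec l (s + S K)), (Nat.leb_spec (S s) l),
      (Nat.ltb_spec l (S s + K)), (Nat.eqb_spec (S l) (S s)); simpl; try lia; try ring.
    replace s with l by lia. ring.
Qed.

Lemma Y_of_fin x K : finsupp x K -> Y K x.
Proof.
  intros H. exists (map (fun i => (x i, phi (S i))) (seq 0 K)). split.
  - apply Forall_forall. intros q Hin. apply in_map_iff in Hin as (i & <- & Hi).
    apply in_seq in Hi. simpl. exists (S i). split; [lia|reflexivity].
  - intros l. rewrite fold_seq. destruct (Nat.leb_spec 0 l), (Nat.ltb_spec l (0 + K)); simpl; try lia; auto;
    symmetry; apply H; lia.
Qed.

Lemma fin_of_Y x K : Y K x -> finsupp x K.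
Proof.
  intros HS l Hl. apply (span_zero (fun v => exists j, (1 <= j <= K)%nat /\ v = phi j) (fun l => (K <= l)%nat) x); auto.
  intros v (j & Hj & ->) m Hm. unfold phi. destr; [lia|auto].
Qed.

Lemma csum_one (f : nat -> C) n m : (m < n)%nat -> (forall q, (q < n)%nat -> q <> m -> f q = 0) ->
  csum f n = f m.
Proof.
  revert m. induction n; intros m Hm H; [lia|]. simpl.
  destruct (Nat.eq_dec m n) as [->|Hne].
  - assert (csum f n = 0) as ->. { clear IHn Hm. assert (forall q, (q < n)%nat -> f q = 0) by (intros; apply H; lia).
      clear H. induction n; simpl; [auto|]. rewrite IHn by (intros; apply H0; lia). rewrite H0 by lia. ring. }
    ring.
  - rewrite (IHn m) by (try lia; intros; apply H; lia). rewrite (H n) by lia. ring.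
Qed.

Lemma csum_zero (f : nat -> C) n : (forall q, (q < n)%nat -> f q = 0) -> csum f n = 0.
Proof. induction n; intros H; simpl; [auto|]. rewrite IHn by (intros; apply H; lia). rewrite H by lia. ring. Qed.

Lemma decomp4 l : exists m r, (r < 4)%nat /\ l = (4*m + r)%nat.
Proof. exists (l/4)%nat, (l mod 4)%nat. split; [apply Nat.mod_upper_bound; lia| apply Nat.div_mod; lia]. Qed.
Lemma mod4 m r : (r < 4)%nat -> ((4*m+r) mod 4 = r)%nat.
Proof. intros. symmetry. apply Nat.mod_unique with m; lia. Qed.
Lemma div4 m r : (r < 4)%nat -> ((4*m+r) / 4 = m)%nat.
Proof. intros. symmetry. apply Nat.div_unique with r; lia. Qed.

Ltac fixargs x := repeat match goal with |- context [x ?a] => match goal with |- context [x ?b] =>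
   assert_fails (constr_eq a b); replace a with b by lia end end;
  repeat match goal with |- context [INR ?a] => match goal with |- context [INR ?b] =>
   assert_fails (constr_eq a b); replace a with b by lia end end.
Ltac zero_tac := intros ?q ?Hq; try intros ?Hne; cbv beta; unfold Eop, Fop, sq1; repeat destr; try (exfalso; lia); ring.
Ltac main_tac x := cbv beta; cbn [Nat.eqb]; unfold Eop, Fop, sq1; repeat destr; try (exfalso; lia); fixargs x;
   rewrite ?sqrtINR1; ring.
Ltac solve1 x q0 := match goal with |- context [csum ?f ?n] => rewrite (csum_one f n q0) end; [main_tac x | lia | zero_tac].
Ltac solve0 := match goal with |- context [csum ?f ?n] => rewrite (csum_zero f n) end; [cbn [Nat.eqb]; rewrite ?sqrtINR0; ring | zero_tac].
Ltac try_all x m := first [ solve1 x m | solve0 | (destruct m as [|?m']; [solve0 | solve1 x m']) ].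
Ltac rep_tac := let x := fresh "x" in let l := fresh "l" in let m := fresh "m" in let r := fresh "r" in
  intros x l; destruct (decomp4 l) as (m & r & ? & ->); cbv beta;
  rewrite ?mod4, ?div4 by lia; destruct r as [|[|[|[|r]]]]; try lia; try_all x m.

Definition pV1 (l:nat) : nat := (match l mod 4 with 0 => 4*(l/4)+1 | 1 => 4*(l/4)+0 | 2 => 4*(l/4)+3 | _ => 4*(l/4)+2 end)%nat.
Lemma repV1 : BlockRep V1 pV1 (fun _ => -Ci) (fun _ => 1%nat).
Proof.
  intros x l. destruct (decomp4 l) as (m & r & Hr & ->). unfold V1, opsum, pV1; cbv beta.
  rewrite mod4, div4 by lia.
  destruct r as [|[|[|[|r]]]]; try lia; solve1 x m.
Qed.

Definition pV1r (l:nat) : nat := (match l mod 4 with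
  0 => if l/4 =? 0 then l else 4*(l/4-1)+1 | 1 => 4*(l/4+1)+0
 | 2 => if l/4 =? 0 then l else 4*(l/4-1)+3 | _ => 4*(l/4+1)+2 end)%nat.
Definition kr (l:nat) : nat := (match l mod 4 with 0 => l/4 | 1 => l/4+1 | 2 => l/4 | _ => l/4+1 end)%nat.

Lemma repV1r : BlockRep V1r pV1r (fun _ => -Ci) kr.
Proof. unfold BlockRep, V1r, opsum, pV1r, kr. rep_tac. Qed.

Lemma Ci1 : Ci * RtoC 1 = Ci.
Proof. apply injective_projections; simpl; ring. Qed.

Lemma group1 U p s : Good U p s (fun _ => 1%nat) ->
  (forall n l, (4*n <= l)%nat -> (4*n <= p l)%nat) ->
  (forall lam : C, eigenvalue U lam <-> (lam = Ci \/ lam = - Ci)) /\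
  (forall n : nat, (1 <= n)%nat -> forall x, Y (4 * n) x -> Y (4 * n) (U x)).
Proof.
  intros G Hp. split.
  - intros lam. rewrite (eig_char _ _ _ _ lam G). split.
    + intros (l & Hl). cbv beta in Hl. rewrite sqrtINR1, Ci1 in Hl. exact Hl.
    + intros Hl. exists 0%nat. cbv beta. rewrite sqrtINR1, Ci1. exact Hl.
  - intros n Hn x Hx. apply Y_of_fin. apply fin_of_Y in Hx. intros l Hl.
    destruct G as (HR & _). rewrite HR, Hx by (apply Hp; auto). ring.
Qed.

Lemma group2 U p s k : Good U p s k -> (forall j, exists l, k l = j) ->
  (forall n l, (k l < n)%nat -> (l < 4*n)%nat) ->
  (forall n l, (n < k l)%nat -> (4*n <= l)%nat) ->
  (forall K l, (k l <= K)%nat -> (l < 4*K+8)%nat) ->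
     (forall lam : C, eigenvalue U lam <->
        exists j : nat, lam = Ci * RtoC (sqrt (INR j)) \/
                        lam = - (Ci * RtoC (sqrt (INR j)))) /\
     (forall n : nat, (1 <= n)%nat ->
        forall x, in_span (fun v => exists lam, (Cmod lam < sqrt (INR n))%R
                                               /\ eigpair U lam v) x ->
                  Y (4 * n) x) /\
     (forall n : nat, (1 <= n)%nat ->
        forall x, in_span (fun v => exists lam, (Cmod lam > sqrt (INR n))%R
                                               /\ eigpair U lam v) x ->
                  Yperp (4 * n) x).
Proof.
  intros G Hsurj Hlow Hhigh Hup. split; [|split].
  - intros lam. rewrite (eig_char _ _ _ _ lam G). split.
    + intros (l & Hl). exists (k l). exact Hl.
    + intros (j & Hj). destruct (Hsurj j) as (l & <-). exists l. exact Hj.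
  - intros n Hn x Hx. apply Y_of_fin. intros l Hl.
    refine (span_zero _ (fun l => (4*n <= l)%nat) x _ Hx l Hl).
    intros v (lam & Hlam & (Hdom & HE)) m Hm.
    destruct (classic (v m = 0)) as [|Hne]; auto. exfalso.
    pose proof (eig_form _ _ _ _ _ _ _ G HE Hne) as Hf.
    apply Cmod_form in Hf; [|apply sqrt_pos]. rewrite Hf in Hlam.
    apply sqrt_lt_0_alt, INR_lt in Hlam. specialize (Hlow n m Hlam). lia.
  - intros n Hn x Hx.
    assert (Hz : forall l, (l < 4*n)%nat -> x l = 0).
    { refine (span_zero _ (fun l => (l < 4*n)%nat) x _ Hx).
      intros v (lam & Hlam & (Hdom & HE)) m Hm.
      destruct (classic (v m = 0)) as [|Hne]; auto. exfalso.
      pose proof (eig_form _ _ _ _ _ _ _ G HE Hne) as Hf.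
      apply Cmod_form in Hf; [|apply sqrt_pos]. rewrite Hf in Hlam.
      apply sqrt_lt_0_alt, INR_lt in Hlam. specialize (Hhigh n m Hlam). lia. }
    assert (Hf : exists N, finsupp x N).
    { refine (span_fin _ x _ Hx).
      intros v (lam & Hlam & (Hdom & HE)).
      destruct (classic (exists l0, v l0 <> 0)) as [(l0 & H0)|Hno].
      - exists (4 * k l0 + 8)%nat. intros m Hm.
        destruct (classic (v m = 0)) as [|Hne]; auto. exfalso.
        pose proof (eig_form _ _ _ _ _ _ _ G HE Hne) as Hf1.
        pose proof (eig_form _ _ _ _ _ _ _ G HE H0) as Hf2.
        apply Cmod_form in Hf1; [|apply sqrt_pos].
        apply Cmod_form in Hf2; [|apply sqrt_pos].
        rewrite Hf1 in Hf2. apply sqrt_inj in Hf2; try apply pos_INR.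
        apply INR_eq in Hf2. specialize (Hup (k l0) m ltac:(lia)). lia.
      - exists 0%nat. intros m _. apply NNPP. intro. apply Hno. eauto. }
    split.
    + destruct Hf as (N & HN). apply (fin_l2 _ N HN).
    + intros y Hy. apply fin_of_Y in Hy. unfold inner_is.
      assert (H : forall j, x j * Cconj (y j) = 0).
      { intros j. destruct (Nat.lt_ge_cases j (4*n)).
        - rewrite Hz by auto. ring.
        - rewrite Hy by auto. apply injective_projections; simpl; ring. }
      assert (E : sum_n (fun j => x j * Cconj (y j)) 0%nat = RtoC 0) by (rewrite sum_O; apply H).
      rewrite <- E. apply (@is_series_fin C_AbsRing C_NormedModule). intros; rewrite H; reflexivity.
Qed.

Definition sig4 (a b c d : C) (l : nat) : C :=
  match (l mod 4)%nat with 0%nat => a | 1%nat => b | 2%nat => c | _ => d end.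

Definition pV2 (l:nat) : nat := (match l mod 4 with 0 => 4*(l/4)+2 | 1 => 4*(l/4)+3 | 2 => 4*(l/4)+0 | _ => 4*(l/4)+1 end)%nat.
Definition pb (l:nat) : nat := (match l mod 4 with
  0 => 4*(l/4+1)+1 | 1 => if l/4 =? 0 then l else 4*(l/4-1)+0
 | 2 => 4*(l/4+1)+3 | _ => if l/4 =? 0 then l else 4*(l/4-1)+2 end)%nat.
Definition kb (l:nat) : nat := (match l mod 4 with 0 => l/4+1 | 1 => l/4 | 2 => l/4+1 | _ => l/4 end)%nat.
Definition p2r (l:nat) : nat := (match l mod 4 with
  0 => 4*(l/4+1)+2 | 1 => 4*(l/4+1)+3
 | 2 => if l/4 =? 0 then l else 4*(l/4-1)+0 | _ => if l/4 =? 0 then l else 4*(l/4-1)+1 end)%nat.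
Definition k2r (l:nat) : nat := (match l mod 4 with 0 => l/4+1 | 1 => l/4+1 | 2 => l/4 | _ => l/4 end)%nat.
Definition p2b (l:nat) : nat := (match l mod 4 with
  0 => if l/4 =? 0 then l else 4*(l/4-1)+2 | 1 => if l/4 =? 0 then l else 4*(l/4-1)+3
 | 2 => 4*(l/4+1)+0 | _ => 4*(l/4+1)+1 end)%nat.
Definition k2b (l:nat) : nat := (match l mod 4 with 0 => l/4 | 1 => l/4 | 2 => l/4+1 | _ => l/4+1 end)%nat.

Ltac norm := repeat (first [rewrite mod4 in * by lia | rewrite div4 in * by lia
   | progress (cbv iota beta in *) | progress (cbn [Nat.eqb Nat.add] in *)]).
Ltac casel l := let m := fresh "m" in let r := fresh "r" in let Hr := fresh "Hr" in
  destruct (decomp4 l) as (m & r & Hr & ->);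
  unfold pV1, pV2, pV1r, pb, p2r, p2b, kr, kb, k2r, k2b, sig4 in *;
  destruct r as [|[|[|[|r]]]]; try lia; destruct m as [|m]; norm.
Ltac cfin := try lia; try (apply injective_projections; simpl; ring).
Ltac good_tac rep := split; [exact rep|]; split; [intros l; casel l; cfin|];
  split; [intros l Hl; casel l; cfin|]; split; [intros l; casel l; cfin|];
  split; [intros l Hl; casel l; cfin| intros l; casel l; cfin].

Lemma repW1 : BlockRep W1 pV1 (sig4 1 (-1) 1 (-1)) (fun _ => 1%nat).
Proof. unfold BlockRep, W1, opsum, pV1, sig4. rep_tac. Qed.
Lemma repV2 : BlockRep V2 pV2 (fun _ => -Ci) (fun _ => 1%nat).
Proof. unfold BlockRep, V2, opsum, pV2. rep_tac. Qed.
Lemma repW2 : BlockRep W2 pV2 (sig4 1 1 (-1) (-1)) (fun _ => 1%nat).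
Proof. unfold BlockRep, W2, opsum, pV2, sig4. rep_tac. Qed.
Lemma repW1r : BlockRep W1r pV1r (sig4 (-1) 1 (-1) 1) kr.
Proof. unfold BlockRep, W1r, opsum, pV1r, kr, sig4. rep_tac. Qed.
Lemma repV1b : BlockRep V1b pb (fun _ => -Ci) kb.
Proof. unfold BlockRep, V1b, opsum, pb, kb. rep_tac. Qed.
Lemma repW1b : BlockRep W1b pb (sig4 (-1) 1 (-1) 1) kb.
Proof. unfold BlockRep, W1b, opsum, pb, kb, sig4. rep_tac. Qed.
Lemma repV2r : BlockRep V2r p2r (fun _ => -Ci) k2r.
Proof. unfold BlockRep, V2r, opsum, p2r, k2r. rep_tac. Qed.
Lemma repW2r : BlockRep W2r p2r (sig4 1 1 (-1) (-1)) k2r.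
Proof. unfold BlockRep, W2r, opsum, p2r, k2r, sig4. rep_tac. Qed.
Lemma repV2b : BlockRep V2b p2b (fun _ => -Ci) k2b.
Proof. unfold BlockRep, V2b, opsum, p2b, k2b. rep_tac. Qed.
Lemma repW2b : BlockRep W2b p2b (sig4 1 1 (-1) (-1)) k2b.
Proof. unfold BlockRep, W2b, opsum, p2b, k2b, sig4. rep_tac. Qed.

Lemma goodV1 : Good V1 pV1 (fun _ => -Ci) (fun _ => 1%nat). Proof. good_tac repV1. Qed.
Lemma goodW1 : Good W1 pV1 (sig4 1 (-1) 1 (-1)) (fun _ => 1%nat). Proof. good_tac repW1. Qed.
Lemma goodV2 : Good V2 pV2 (fun _ => -Ci) (fun _ => 1%nat). Proof. good_tac repV2. Qed.
Lemma goodW2 : Good W2 pV2 (sig4 1 1 (-1) (-1)) (fun _ => 1%nat). Proof. good_tac repW2. Qed.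
Lemma goodV1r : Good V1r pV1r (fun _ => -Ci) kr. Proof. good_tac repV1r. Qed.
Lemma goodW1r : Good W1r pV1r (sig4 (-1) 1 (-1) 1) kr. Proof. good_tac repW1r. Qed.
Lemma goodV1b : Good V1b pb (fun _ => -Ci) kb. Proof. good_tac repV1b. Qed.
Lemma goodW1b : Good W1b pb (sig4 (-1) 1 (-1) 1) kb. Proof. good_tac repW1b. Qed.
Lemma goodV2r : Good V2r p2r (fun _ => -Ci) k2r. Proof. good_tac repV2r. Qed.
Lemma goodW2r : Good W2r p2r (sig4 1 1 (-1) (-1)) k2r. Proof. good_tac repW2r. Qed.
Lemma goodV2b : Good V2b p2b (fun _ => -Ci) k2b. Proof. good_tac repV2b. Qed.
Lemma goodW2b : Good W2b p2b (sig4 1 1 (-1) (-1)) k2b. Proof. good_tac repW2b. Qed.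

Lemma hpV1 : forall n l, (4*n <= l)%nat -> (4*n <= pV1 l)%nat.
Proof. intros n l H. casel l; lia. Qed.
Lemma hpV2 : forall n l, (4*n <= l)%nat -> (4*n <= pV2 l)%nat.
Proof. intros n l H. casel l; lia. Qed.

Ltac ext_tac k r0 := split; [intros j; exists (4*j + r0)%nat; unfold k; rewrite mod4, div4 by lia; cbv iota; lia|];
  split; [intros n l H; casel l; lia|]; split; intros n l H; casel l; lia.

Lemma extr : (forall j, exists l, kr l = j) /\ (forall n l, (kr l < n)%nat -> (l < 4*n)%nat) /\
  (forall n l, (n < kr l)%nat -> (4*n <= l)%nat) /\ (forall K l, (kr l <= K)%nat -> (l < 4*K+8)%nat).
Proof. ext_tac kr 0%nat. Qed.
Lemma extb : (forall j, exists l, kb l = j) /\ (forall n l, (kb l < n)%nat -> (l < 4*n)%nat) /\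
  (forall n l, (n < kb l)%nat -> (4*n <= l)%nat) /\ (forall K l, (kb l <= K)%nat -> (l < 4*K+8)%nat).
Proof. ext_tac kb 1%nat. Qed.
Lemma ext2r : (forall j, exists l, k2r l = j) /\ (forall n l, (k2r l < n)%nat -> (l < 4*n)%nat) /\
  (forall n l, (n < k2r l)%nat -> (4*n <= l)%nat) /\ (forall K l, (k2r l <= K)%nat -> (l < 4*K+8)%nat).
Proof. ext_tac k2r 2%nat. Qed.
Lemma ext2b : (forall j, exists l, k2b l = j) /\ (forall n l, (k2b l < n)%nat -> (l < 4*n)%nat) /\
  (forall n l, (n < k2b l)%nat -> (4*n <= l)%nat) /\ (forall K l, (k2b l <= K)%nat -> (l < 4*K+8)%nat).
Proof. ext_tac k2b 0%nat. Qed.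

Ltac g2 good ext := let a := fresh in let b := fresh in let c := fresh in let d := fresh in
  destruct ext as (a & b & c & d); exact (group2 _ _ _ _ good a b c d).

Theorem mainTheorem6 :
  (forall U : vec -> vec, In U (V1 :: W1 :: V2 :: W2 :: nil) ->
     (forall lam : C, eigenvalue U lam <-> (lam = Ci \/ lam = - Ci)) /\
     (forall n : nat, (1 <= n)%nat ->
        forall x, Y (4 * n) x -> Y (4 * n) (U x)))
  /\
  (forall U : vec -> vec,
     In U (V1r :: W1r :: V1b :: W1b :: V2r :: W2r :: V2b :: W2b :: nil) ->
     (forall lam : C, eigenvalue U lam <->
        exists j : nat, lam = Ci * RtoC (sqrt (INR j)) \/
                        lam = - (Ci * RtoC (sqrt (INR j)))) /\
     (forall n : nat, (1 <= n)%nat ->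
        forall x, in_span (fun v => exists lam, (Cmod lam < sqrt (INR n))%R
                                               /\ eigpair U lam v) x ->
                  Y (4 * n) x) /\
     (forall n : nat, (1 <= n)%nat ->
        forall x, in_span (fun v => exists lam, (Cmod lam > sqrt (INR n))%R
                                               /\ eigpair U lam v) x ->
                  Yperp (4 * n) x)).
Proof.
  split.
  - intros U HU. simpl in HU. destruct HU as [<-|[<-|[<-|[<-|[]]]]].
    + exact (group1 _ _ _ goodV1 hpV1).
    + exact (group1 _ _ _ goodW1 hpV1).
    + exact (group1 _ _ _ goodV2 hpV2).
    + exact (group1 _ _ _ goodW2 hpV2).
  - intros U HU. simpl in HU. destruct HU as [<-|[<-|[<-|[<-|[<-|[<-|[<-|[<-|[]]]]]]]]].
    + g2 goodV1r extr.
    + g2 goodW1r extr.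
    + g2 goodV1b extb.
    + g2 goodW1b extb.
    + g2 goodV2r ext2r.
    + g2 goodW2r ext2r.
    + g2 goodV2b ext2b.
    + g2 goodW2b ext2b.
Qed.
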